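(* Let $(\mathbf k((G)),l)$ be a series field with prelogarithmic section, $\psi$ a morphism from $(\mathbf k((G)),l)$ to itself and $H$ a subgroup of $G$ such that $(\mathrm{Comp}_H)$: $\psi(h)=l(h)$ for every $h\in H$ with $l(h)\in G$. Then for every $h\in H$ with $l(h)\in G$ and every $k\in\mathbf k$: (1) $\psi^{EL}(\mathrm{Exp}(k\cdot h))=\mathrm{Exp}(k\cdot\mathrm{Log}(h))$; (2) if $\psi^{EL}$ is surjective, then $(\psi^{EL})^{-1}(\mathrm{Exp}(k\cdot\mathrm{Log}(h)))\in H\cdot\mathrm{Exp}\,\mathbf k((H^{>1}))$.
   Context: Let $\mathbf k$ be an ordered field with an order-preserving group isomorphism $\log:(\mathbf k^{>0},\cdot)\to(\mathbf k,+)$, and $(G,\cdot,<)$ a totally ordered abelian group (written multiplicatively). $\mathbf k((G))$ denotes the field of generalized power series $\alpha=\sum_{g\in G}\alpha(g)\,g$ ($\alpha(g)\in\mathbf k$) with anti-well-ordered support, usual operations, canonical valuation $v(\alpha)=\max\operatorname{supp}\alpha$ and ordering $\alpha>0$ iff $\alpha(v(\alpha))>0$; $\mathbf k$, $G$ are identified with subsets of $\mathbf k((G))$ (so ''$l(h)\in G$'' means $l(h)$ is a monomial with coefficient $1$). For $S\subseteq G$, $\mathbf k((S))=\{\alpha:\operatorname{supp}\alpha\subseteq S\}$; $H^{>1}=\{h\in H:h>1\}$. A prelogarithmic section is an order-preserving group embedding $l:(G,\cdot)\to(\mathbf k((G^{>1})),+)$. Exponential extension: $G^\#$ is the ordered abelian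 group of formal symbols $e(\alpha)$, $\alpha\in\mathbf k((G^{>1}))$, with $e(\alpha)e(\beta)=e(\alpha+\beta)$, $e(\alpha)<e(\beta)\iff\alpha<\beta$, and $e(l(g))$ identified with $g\in G$; $l^\#(e(\alpha))=\alpha$ is a prelogarithmic section of $\mathbf k((G^\#))$ extending $l$. Iterating gives $G^{\#n}$, $l^{\#n}$; the EL-series field $\mathbf k((G))^{EL}=\bigcup_n\mathbf k((G^{\#n}))$ carries the logarithm $\mathrm{Log}$ (union of the associated prelogarithms $L(g\,a(1+\varepsilon))=l(g)+\log a+\sum_{i\ge1}(-1)^{i-1}\varepsilon^i/i$), a bijection from positive elements onto the field, and $\mathrm{Exp}=\mathrm{Log}^{-1}$. An order-preserving group embedding $\psi:G\to G$, extended to $\mathbf k((G))$ by $\psi(\sum a_gg)=\sum a_g\psi(g)$, is a morphism of $(\mathbf k((G)),l)$ to itself if $\psi\circ l=l\circ\psi$ on $G$; it induces $\psi^\#=(l^\#)^{-1}\circ\psi\circ l^\#$ on $G^\#$, iterates $\psi^{\#n}$, and $\psi^{EL}=\bigcup_n\psi^{\#n}$. *)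

(* Defs.v *)
From HB Require Import structures.
From mathcomp Require Import all_boot all_order all_algebra.
From Stdlib Require Import Classical ClassicalEpsilon.
From Stdlib Require List.
Unset Printing Implicit Defensive.
Import Order.TTheory GRing.Theory Num.Theory.
Local Open Scope ring_scope.

Record oagroup := OAGroup {
  ocar :> Type;
  omul : ocar -> ocar -> ocar;
  oone : ocar;
  oinv : ocar -> ocar;
  olt : ocar -> ocar -> Prop;
  omulA : forall x y z, omul x (omul y z) = omul (omul x y) z;
  omulC : forall x y, omul x y = omul y x;
  omul1 : forall x, omul oone x = x;
  omulV : forall x, omul (oinv x) x = oone;
  olt_irr : forall x, ~ olt x x;
  olt_trans : forall x y z, olt x y -> olt y z -> olt x z;
  olt_total : forall x y, olt x y \/ x = y \/ olt y x;
  olt_mul : forall x y z, olt x y -> olt (omul x z) (omul y z)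
}.

(* Generic (raw) generalized power series over a monomial type T,
   i.e. functions T -> k; the conditions of being a series are predicates. *)

Definition supp (k : realFieldType) (T : Type) (a : T -> k) (x : T) : Prop := a x <> 0.

Definition antiwo (T : Type) (lt : T -> T -> Prop) (S : T -> Prop) : Prop :=
  forall X : T -> Prop, (forall x, X x -> S x) -> (exists x, X x) ->
  exists m, X m /\ forall x, X x -> x = m \/ lt x m.

Definition series_in (k : realFieldType) (T : Type) (lt : T -> T -> Prop)
  (S : T -> Prop) (a : T -> k) : Prop :=
  antiwo T lt (supp k T a) /\ forall x, a x <> 0 -> S x.

Definition spos (k : realFieldType) (T : Type) (lt : T -> T -> Prop) (a : T -> k) : Prop :=
  exists g, 0 < a g /\ forall x, lt g x -> a x = 0.

Definition mono (k : realFieldType) (T : Type) (g : T) : T -> k :=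
  fun x => if excluded_middle_informative (x = g) then 1 else 0.

(* sum of w over a (Prop-defined) set D, when D is finite; 0 otherwise *)
Definition fsum (k : realFieldType) (A : Type) (D : A -> Prop) (w : A -> k) : k :=
  match excluded_middle_informative
          (exists s : seq A, List.NoDup s /\ forall a, List.In a s <-> D a) with
  | left H => \sum_(a <- proj1_sig (constructive_indefinite_description _ H)) w a
  | right _ => 0
  end.

Definition smul (k : realFieldType) (T : Type) (mul : T -> T -> T) (a b : T -> k) : T -> k :=
  fun g => fsum k (T * T) (fun p : T * T => mul p.1 p.2 = g /\ a p.1 <> 0 /\ b p.2 <> 0)
                (fun p => a p.1 * b p.2).

Fixpoint spow (k : realFieldType) (T : Type) (mul : T -> T -> T) (one : T)
  (a : T -> k) (i : nat) : T -> k :=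
  match i with
  | 0 => mono k T one
  | i'.+1 => smul k T mul a (spow k T mul one a i')
  end.

Definition ssum (k : realFieldType) (T : Type) (f : nat -> T -> k) : T -> k :=
  fun g => fsum k nat (fun i => f i g <> 0) (fun i => f i g).

(* image of a series under a map of monomials: sum a_g g |-> sum a_g f(g)
   (f injective in all uses) *)
Definition push (k : realFieldType) (A B : Type) (f : A -> B) (a : A -> k) : B -> k :=
  fun b => match excluded_middle_informative (exists y, f y = b) with
           | left H => a (proj1_sig (constructive_indefinite_description _ H))
           | right _ => 0
           end.

(* leading monomial v(a) (max of support); junk value [one] if none *)
Definition lead (k : realFieldType) (T : Type) (lt : T -> T -> Prop) (one : T) (a : T -> k) : T :=
  match excluded_middle_informative
          (exists g, a g <> 0 /\ forall x, lt g x -> a x = 0) with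
  | left H => proj1_sig (constructive_indefinite_description _ H)
  | right _ => one
  end.

(* The logarithm associated to a prelogarithmic section lT:
   L(g a (1+eps)) = lT(g) + log a + sum_{i>=1} (-1)^(i-1) eps^i / i *)
Definition slog (k : realFieldType) (logk : k -> k) (T : Type)
  (lt : T -> T -> Prop) (mul : T -> T -> T) (one : T) (lT : T -> T -> k)
  (a : T -> k) : T -> k :=
  let g := lead k T lt one a in
  let c := a g in
  let eps : T -> k := fun x =>
      if excluded_middle_informative (x = one) then 0 else a (mul g x) / c in
  fun x => lT g x + logk c * mono k T one x
           + ssum k T (fun i y => ((-1) ^+ i / i.+1%:R) * spow k T mul one eps i.+1 y) x.

(* G^{#(n+1)} is the set of symbols e(alpha),
   alpha in k((G^{#n >1})); we represent e(alpha) by alpha itself, so the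
   carrier of level n+1 is (raw) Tn n -> k.  The identification of g in G^{#n}
   with e(l^{#n}(g)) is the embedding l^{#n} : Tn n -> Tn n.+1.              *)

Fixpoint Tn (k : realFieldType) (G : oagroup) (n : nat) : Type :=
  match n with 0 => ocar G | m.+1 => Tn k G m -> k end.

Fixpoint lt_n (k : realFieldType) (G : oagroup) (n : nat) : Tn k G n -> Tn k G n -> Prop :=
  match n return Tn k G n -> Tn k G n -> Prop with
  | 0 => @olt G
  | m.+1 => fun a b => spos k (Tn k G m) (lt_n k G m) (fun x => b x - a x)
  end.

Fixpoint mul_n (k : realFieldType) (G : oagroup) (n : nat) : Tn k G n -> Tn k G n -> Tn k G n :=
  match n return Tn k G n -> Tn k G n -> Tn k G n with
  | 0 => @omul G
  | m.+1 => fun a b x => a x + b x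
  end.

Fixpoint one_n (k : realFieldType) (G : oagroup) (n : nat) : Tn k G n :=
  match n return Tn k G n with
  | 0 => oone G
  | m.+1 => fun _ => 0
  end.

Fixpoint l_n (k : realFieldType) (G : oagroup) (l : G -> G -> k) (n : nat)
  : Tn k G n -> Tn k G n -> k :=
  match n return Tn k G n -> Tn k G n -> k with
  | 0 => l
  | m.+1 => fun a => push k (Tn k G m) (Tn k G m.+1) (l_n k G l m) a
  end.

(* psi^{#n} = (l^#)^{-1} o psi^{#(n-1)} o l^# *)
Fixpoint psi_n (k : realFieldType) (G : oagroup) (psi : G -> G) (n : nat)
  : Tn k G n -> Tn k G n :=
  match n return Tn k G n -> Tn k G n with
  | 0 => psi
  | m.+1 => fun a => push k (Tn k G m) (Tn k G m) (psi_n k G psi m) a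
  end.

Fixpoint validT (k : realFieldType) (G : oagroup) (n : nat) : Tn k G n -> Prop :=
  match n return Tn k G n -> Prop with
  | 0 => fun _ => True
  | m.+1 => fun a => series_in k (Tn k G m) (lt_n k G m)
                        (fun x => validT k G m x /\ lt_n k G m (one_n k G m) x) a
  end.

(* EL-series: elements of k((G^{#n})) for some n, up to the embeddings. *)

Definition EL (k : realFieldType) (G : oagroup) := {n : nat & Tn k G n -> k}.

Fixpoint liftup (k : realFieldType) (G : oagroup) (l : G -> G -> k) (n j : nat)
  : (Tn k G n -> k) -> (Tn k G (j + n)%N -> k) :=
  match j return (Tn k G n -> k) -> (Tn k G (j + n)%N -> k) with
  | 0 => fun a => a
  | j'.+1 => fun a => push k (Tn k G (j' + n)%N) (Tn k G (j' + n).+1) (l_n k G l (j' + n)%N) (liftup k G l n j' a)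
  end.

Definition liftto (k : realFieldType) (G : oagroup) (l : G -> G -> k) (n m : nat)
  (a : Tn k G n -> k) : Tn k G m -> k :=
  match (n <= m)%N as b return (n <= m)%N = b -> Tn k G m -> k with
  | true => fun H => eq_rect _ (fun p => Tn k G p -> k) (liftup k G l n (m - n)%N a) m (subnK H)
  | false => fun _ _ => 0
  end (erefl _).

Definition ELeq (k : realFieldType) (G : oagroup) (l : G -> G -> k) (x y : EL k G) : Prop :=
  exists m, (projT1 x <= m)%N /\ (projT1 y <= m)%N /\
    forall t, liftto k G l (projT1 x) m (projT2 x) t = liftto k G l (projT1 y) m (projT2 y) t.

Definition ELvalid (k : realFieldType) (G : oagroup) (x : EL k G) : Prop :=
  series_in k (Tn k G (projT1 x)) (lt_n k G (projT1 x)) (validT k G (projT1 x)) (projT2 x).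

Definition ELpos (k : realFieldType) (G : oagroup) (x : EL k G) : Prop :=
  spos k (Tn k G (projT1 x)) (lt_n k G (projT1 x)) (projT2 x).

Definition ELscale (k : realFieldType) (G : oagroup) (c : k) (x : EL k G) : EL k G :=
  existT _ (projT1 x) (fun t => c * projT2 x t).

Definition ELmul (k : realFieldType) (G : oagroup) (l : G -> G -> k) (x y : EL k G) : EL k G :=
  let m := maxn (projT1 x) (projT1 y) in
  existT _ m (smul k (Tn k G m) (mul_n k G m) (liftto k G l (projT1 x) m (projT2 x))
                                    (liftto k G l (projT1 y) m (projT2 y))).

Definition ELof0 (k : realFieldType) (G : oagroup) (a : G -> k) : EL k G :=
  existT (fun n => Tn k G n -> k) 0%N a.

Definition ELLog (k : realFieldType) (G : oagroup) (l : G -> G -> k) (logk : k -> k)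
  (x : EL k G) : EL k G :=
  existT _ (projT1 x)
    (slog k logk (Tn k G (projT1 x)) (lt_n k G (projT1 x)) (mul_n k G (projT1 x)) (one_n k G (projT1 x))
          (l_n k G l (projT1 x)) (projT2 x)).

Definition ELExp (k : realFieldType) (G : oagroup) (l : G -> G -> k) (logk : k -> k)
  (b : EL k G) : EL k G :=
  match excluded_middle_informative
          (exists y, ELvalid k G y /\ ELpos k G y /\ ELeq k G l (ELLog k G l logk y) b) with
  | left H => proj1_sig (constructive_indefinite_description _ H)
  | right _ => ELof0 k G (fun _ : G => 0)
  end.

Definition ELpsi (k : realFieldType) (G : oagroup) (psi : G -> G) (x : EL k G) : EL k G :=
  existT _ (projT1 x) (push k (Tn k G (projT1 x)) (Tn k G (projT1 x)) (psi_n k G psi (projT1 x)) (projT2 x)).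

Definition is_log (k : realFieldType) (logk : k -> k) : Prop :=
  (forall a b, 0 < a -> 0 < b -> logk (a * b) = logk a + logk b) /\
  (forall a b, 0 < a -> a < b -> logk a < logk b) /\
  (forall c, exists a, 0 < a /\ logk a = c).

Definition prelog_section (k : realFieldType) (G : oagroup) (l : G -> G -> k) : Prop :=
  (forall g, series_in k G (olt G) (fun x => olt G (oone G) x) (l g)) /\
  (forall g h x, l (omul G g h) x = l g x + l h x) /\
  (forall g h, olt G g h -> spos k G (olt G) (fun x => l h x - l g x)).

Definition morphism_l (k : realFieldType) (G : oagroup) (l : G -> G -> k) (psi : G -> G) : Prop :=
  (forall g h, psi (omul G g h) = omul G (psi g) (psi h)) /\
  (forall g h, olt G g h -> olt G (psi g) (psi h)) /\
  (forall g x, l (psi g) x = push k G G psi (l g) x).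

Definition subgroup (G : oagroup) (H : G -> Prop) : Prop :=
  H (oone G) /\ (forall g h, H g -> H h -> H (omul G g h)) /\ (forall g, H g -> H (oinv G g)).

(* "l(h) in G" : l(h) is a monomial with coefficient 1 *)
Definition l_in_G (k : realFieldType) (G : oagroup) (l : G -> G -> k) (h : G) : Prop :=
  exists m : G, forall x, l h x = mono k G m x.

(* Main.v *)
Require Import Defs.
From HB Require Import structures.
From mathcomp Require Import all_boot all_order all_algebra.
From Stdlib Require Import Classical ClassicalEpsilon FunctionalExtensionality.
From Stdlib Require List.
Unset Printing Implicit Defensive.
Import Order.TTheory GRing.Theory Num.Theory.
Local Open Scope ring_scope.

Lemma fsum_ne0 (k : realFieldType) (A : Type) (D : A -> Prop) (w : A -> k) :
  fsum k A D w <> 0 -> exists a, D a /\ w a <> 0.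
Proof.
rewrite /fsum; case: excluded_middle_informative => [H|_]; last by [].
case: (constructive_indefinite_description _ H) => s [nd Hs] /= Hsum.
have : exists a, List.In a s /\ w a <> 0.
  elim: s {nd Hs} Hsum => [|a s IH]; first by rewrite big_nil.
  rewrite big_cons => Hne.
  case: (classic (w a = 0)) => Ha.
    have [b [Hb1 Hb2]] : exists b, List.In b s /\ w b <> 0.
      by apply: IH; move: Hne; rewrite Ha add0r.
    by exists b; split => //; right.
  by exists a; split => //; left.
by case=> a [/Hs Ha Hw]; exists a.
Qed.

Lemma fsum0 (k : realFieldType) (A : Type) (D : A -> Prop) (w : A -> k) :
  (forall a, ~ D a) -> fsum k A D w = 0.
Proof.
move=> H; case: (classic (fsum k A D w = 0)) => // /fsum_ne0 [a [Ha _]].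
by case: (H a).
Qed.

Lemma fsum1 (k : realFieldType) (A : Type) (D : A -> Prop) (w : A -> k) a0 :
  (forall a, D a <-> a = a0) -> fsum k A D w = w a0.
Proof.
move=> HD; rewrite /fsum; case: excluded_middle_informative => [H|H]; last first.
  exfalso; apply: H; exists [:: a0]; split.
    by constructor; [case | constructor].
  by move=> a; rewrite HD /=; split; [case=> // -> | move=> ->; left].
case: (constructive_indefinite_description _ H) => s [nd Hs] /=.
have Hin : forall a, List.In a s <-> a = a0 by move=> a; rewrite Hs HD.
case: s nd Hin {Hs} => [|x s] nd Hin.
  by have := (proj2 (Hin a0) erefl).
have xa : x = a0 by apply/Hin; left.
subst x; case: s nd Hin => [|y s] nd Hin; first by rewrite big_cons big_nil addr0.
have ya : y = a0 by apply/Hin; right; left.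
subst y; inversion nd as [|? ? Hn]; subst.
by exfalso; apply: Hn; left.
Qed.

Lemma liftto_eq {k : realFieldType} {G : oagroup} {l : G -> G -> k} n m (H : (n <= m)%N) a :
  liftto k G l n m a = eq_rect _ (fun p => Tn k G p -> k) (liftup k G l n (m - n) a) m (subnK H).
Proof.
rewrite /liftto.
generalize (erefl (n <= m)%N).
generalize (n <= m)%N at 2 3.
case=> e; last by rewrite H in e.
by rewrite (eq_irrelevance e H).
Qed.

Lemma cast_liftup {k : realFieldType} {G : oagroup} {l : G -> G -> k} n i j
   (e : (i + n = j + n)%N) a :
  eq_rect _ (fun p => Tn k G p -> k) (liftup k G l n i a) _ e = liftup k G l n j a.
Proof.
have ij : i = j by apply/eqP; rewrite -(eqn_add2r n); apply/eqP.
subst j; by rewrite (eq_irrelevance e erefl).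
Qed.

Lemma liftto_refl {k : realFieldType} {G : oagroup} {l : G -> G -> k} n a :
  liftto k G l n n a = a.
Proof.
rewrite (@liftto_eq _ _ _ n n (leqnn n) a).
have E : (n - n + n = 0 + n)%N by rewrite subnn.
rewrite (eq_irrelevance (subnK (leqnn n)) E).
exact: (@cast_liftup _ _ _ n (n-n) 0 E a).
Qed.

Lemma liftto_add {k : realFieldType} {G : oagroup} {l : G -> G -> k} n j a :
  liftto k G l n (j + n) a = liftup k G l n j a.
Proof.
rewrite (@liftto_eq _ _ _ n _ (leq_addl j n) a).
exact: cast_liftup.
Qed.

Lemma liftto_S {k : realFieldType} {G : oagroup} {l : G -> G -> k} n m a :
  (n <= m)%N -> liftto k G l n m.+1 a = push k _ _ (l_n k G l m) (liftto k G l n m a).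
Proof.
move=> H; have [j ->] : exists j, m = (j + n)%N by exists (m - n)%N; rewrite subnK.
rewrite liftto_add.
change (liftto k G l n (j.+1 + n) a = push k (Tn k G (j + n)) (Tn k G (j + n).+1) (l_n k G l (j + n)) (liftup k G l n j a)).
by rewrite liftto_add.
Qed.

Definition injf {A B : Type} (f : A -> B) := forall x y, f x = f y -> x = y.

Lemma push_at {k : realFieldType} {A B : Type} (f : A -> B) (a : A -> k) (x : A) :
  injf f -> push k A B f a (f x) = a x.
Proof.
move=> fi; rewrite /push; case: excluded_middle_informative => [H|H]; last by case: H; exists x.
by case: (constructive_indefinite_description _ H) => y /= /fi ->.
Qed.

Lemma push_out {k : realFieldType} {A B : Type} (f : A -> B) (a : A -> k) (b : B) :
  (forall y, f y <> b) -> push k A B f a b = 0.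
Proof.
move=> H; rewrite /push; case: excluded_middle_informative => [[y Hy]|//].
by case: (H y).
Qed.

Lemma push_cases {A B : Type} (f : A -> B) (b : B) :
  (exists y, b = f y) \/ (forall y, f y <> b).
Proof.
case: (classic (exists y, f y = b)) => [[y <-]|H]; first by left; exists y.
by right => y Hy; apply: H; exists y.
Qed.

Lemma push_ne0 {k : realFieldType} {A B : Type} (f : A -> B) (a : A -> k) (b : B) :
  injf f -> push k A B f a b <> 0 -> exists y, b = f y /\ a y <> 0.
Proof.
move=> fi; case: (push_cases f b) => [[y ->]|H]; last by rewrite push_out.
by rewrite push_at // => ?; exists y.
Qed.

Lemma push_mono {k : realFieldType} {A B : Type} (f : A -> B) z :
  injf f -> push k A B f (mono k A z) = mono k B (f z).
Proof.
move=> fi; apply: functional_extensionality => b.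
case: (push_cases f b) => [[y ->]|H].
  rewrite push_at // /mono.
  case: excluded_middle_informative => [Hy|Hy]; case: excluded_middle_informative => [Hf|Hf] //.
    by case: Hf; rewrite Hy.
  by case: Hy; apply: fi.
rewrite push_out // /mono; case: excluded_middle_informative => // E.
by case: (H z).
Qed.

Lemma push_injP {k : realFieldType} {A B : Type} (f : A -> B) (a a' : A -> k) :
  injf f -> (forall b, push k A B f a b = push k A B f a' b) -> forall x, a x = a' x.
Proof. by move=> fi H x; rewrite -!(push_at f _ x fi). Qed.

Lemma push_comp {k : realFieldType} {A B C : Type} (f : B -> C) (g : A -> B) (a : A -> k) :
  injf f -> injf g -> push k B C f (push k A B g a) = push k A C (fun x => f (g x)) a.
Proof.
move=> fi gi; have fgi : injf (fun x => f (g x)) by move=> x y /fi /gi.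
apply: functional_extensionality => c.
case: (push_cases (fun x => f (g x)) c) => [[y ->]|H].
  by rewrite (push_at f) // (push_at g) // (push_at (fun x => f (g x))) //.
rewrite (push_out _ _ _ H); case: (push_cases f c) => [[y Ey]|H2]; last by rewrite push_out.
rewrite Ey push_at //; case: (push_cases g y) => [[z Hz]|H3]; last by rewrite push_out.
by exfalso; apply: (H z); rewrite Ey Hz.
Qed.

Lemma push_lin {k : realFieldType} {A B : Type} (f : A -> B) (a a' : A -> k) (c d : k) (b : B) :
  injf f -> push k A B f (fun x => c * a x + d * a' x) b =
            c * push k A B f a b + d * push k A B f a' b.
Proof.
move=> fi; case: (push_cases f b) => [[y ->]|H].
  by rewrite !push_at.
by rewrite !push_out ?mulr0 ?addr0.
Qed.

Lemma antiwo_sub {T : Type} (lt : T -> T -> Prop) {S S' : T -> Prop} :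
  antiwo T lt S -> (forall x, S' x -> S x) -> antiwo T lt S'.
Proof. by move=> H sub X HX; apply: H => x /HX /sub. Qed.

Lemma antiwo_union {T : Type} (lt : T -> T -> Prop) {W S1 S2 : T -> Prop} :
  (forall x y z, W x -> W y -> W z -> lt x y -> lt y z -> lt x z) ->
  (forall x y, W x -> W y -> x <> y -> lt x y \/ lt y x) ->
  (forall x, S1 x -> W x) -> (forall x, S2 x -> W x) ->
  antiwo T lt S1 -> antiwo T lt S2 -> antiwo T lt (fun x => S1 x \/ S2 x).
Proof.
move=> tr to W1 W2 A1 A2 X HX [x0 Xx0].
case: (classic (exists x, X x /\ S1 x)) => [E1|N1]; last first.
  apply: A2 => [x Xx|]; last by exists x0.
  by case: (HX x Xx) => // s1; case: N1; exists x.
case: (classic (exists x, X x /\ S2 x)) => [E2|N2]; last first.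
  apply: A1 => [x Xx|]; last by exists x0.
  by case: (HX x Xx) => // s2; case: N2; exists x.
have [m1 [[Xm1 S1m1] M1]] := A1 (fun x => X x /\ S1 x) (fun x h => proj2 h) E1.
have [m2 [[Xm2 S2m2] M2]] := A2 (fun x => X x /\ S2 x) (fun x h => proj2 h) E2.
have key : forall m, X m -> (m1 = m \/ lt m1 m) -> (m2 = m \/ lt m2 m) -> W m ->
    exists m, X m /\ (forall x, X x -> x = m \/ lt x m).
  move=> m Xm H1 H2 Wm; exists m; split => // x Xx.
  case: (HX x Xx) => Sx.
    case: (M1 x (conj Xx Sx)) => [e|lx]; case: H1 => [e1|l1].
    - by left; rewrite e e1.
    - by right; rewrite e.
    - by right; rewrite -e1.
    - by right; apply: (tr x m1 m) => //; apply: W1.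
  case: (M2 x (conj Xx Sx)) => [e|lx]; case: H2 => [e1|l1].
  - by left; rewrite e e1.
  - by right; rewrite e.
  - by right; rewrite -e1.
  - by right; apply: (tr x m2 m) => //; apply: W2.
case: (classic (m1 = m2)) => [e|ne].
  by apply: (key m1) => //; [left|left|apply: W1].
case: (to m1 m2 (W1 _ S1m1) (W2 _ S2m2) ne) => l.
  by apply: (key m2) => //; [right|left|apply: W2].
by apply: (key m1) => //; [left|right|apply: W1].
Qed.

Lemma antiwo_max {k : realFieldType} {T : Type} (lt : T -> T -> Prop) (a : T -> k) :
  antiwo T lt (supp k T a) -> (exists x, a x <> 0) ->
  exists w, a w <> 0 /\ forall x, a x <> 0 -> x = w \/ lt x w.
Proof.
move=> A [x0 H0]; have [m [Hm M]] := A (supp k T a) (fun x h => h) (ex_intro _ x0 H0).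
by exists m.
Qed.

Lemma max_above {k : realFieldType} {T : Type} (lt : T -> T -> Prop) {W : T -> Prop} (a : T -> k) w :
  (forall x, ~ lt x x) ->
  (forall x y z, W x -> W y -> W z -> lt x y -> lt y z -> lt x z) ->
  (forall x, a x <> 0 -> W x) -> 
  (forall x, a x <> 0 -> x = w \/ lt x w) -> W w ->
  forall x, lt w x -> a x = 0.
Proof.
move=> irr tr Wa M Ww x lwx; case: (classic (a x = 0)) => // ax.
case: (M x ax) => [e|lxw]; first by rewrite e in lwx; case: (irr w lwx).
by case: (irr x); apply: (tr x w x) => //; apply: Wa.
Qed.

Fixpoint inv_n (k : realFieldType) (G : oagroup) (n : nat) : Tn k G n -> Tn k G n :=
  match n return Tn k G n -> Tn k G n with
  | 0 => @oinv G
  | m.+1 => fun a x => - a x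
  end.


Lemma mul_nC {k : realFieldType} {G : oagroup} n (x y : Tn k G n) :
  mul_n k G n x y = mul_n k G n y x.
Proof. case: n x y => [|n] x y /=; first exact: omulC.
by apply: functional_extensionality => t; rewrite addrC. Qed.

Lemma mul_nA {k : realFieldType} {G : oagroup} n (x y z : Tn k G n) :
  mul_n k G n x (mul_n k G n y z) = mul_n k G n (mul_n k G n x y) z.
Proof. case: n x y z => [|n] x y z /=; first exact: omulA.
by apply: functional_extensionality => t; rewrite addrA. Qed.

Lemma mul_1n {k : realFieldType} {G : oagroup} n (x : Tn k G n) :
  mul_n k G n (one_n k G n) x = x.
Proof. case: n x => [|n] x /=; first exact: omul1.
by apply: functional_extensionality => t; rewrite add0r. Qed.

Lemma mul_n1 {k : realFieldType} {G : oagroup} n (x : Tn k G n) :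
  mul_n k G n x (one_n k G n) = x.
Proof. by rewrite mul_nC mul_1n. Qed.

Lemma mul_Vn {k : realFieldType} {G : oagroup} n (x : Tn k G n) :
  mul_n k G n (inv_n k G n x) x = one_n k G n.
Proof. case: n x => [|n] x /=; first exact: omulV.
by apply: functional_extensionality => t; rewrite addNr. Qed.

Lemma mul_nV {k : realFieldType} {G : oagroup} n (x : Tn k G n) :
  mul_n k G n x (inv_n k G n x) = one_n k G n.
Proof. by rewrite mul_nC mul_Vn. Qed.

Lemma mul_nK {k : realFieldType} {G : oagroup} n (g x : Tn k G n) :
  mul_n k G n (inv_n k G n g) (mul_n k G n g x) = x.
Proof. by rewrite mul_nA mul_Vn mul_1n. Qed.

Lemma mul_n_inj {k : realFieldType} {G : oagroup} n (g x y : Tn k G n) :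
  mul_n k G n g x = mul_n k G n g y -> x = y.
Proof. by move=> E; rewrite -(@mul_nK _ _ n g x) E mul_nK. Qed.

Lemma mul_n_eqg {k : realFieldType} {G : oagroup} n (g x : Tn k G n) :
  mul_n k G n g x = g -> x = one_n k G n.
Proof. by move=> E; apply: (@mul_n_inj _ _ n g); rewrite E mul_n1. Qed.

Lemma lt_n_irr {k : realFieldType} {G : oagroup} n (x : Tn k G n) : ~ lt_n k G n x x.
Proof. case: n x => [|n] x /=; first exact: olt_irr.
by case=> g []; rewrite subrr ltxx. Qed.

Lemma lt_n_mul {k : realFieldType} {G : oagroup} n (x y z : Tn k G n) :
  lt_n k G n x y -> lt_n k G n (mul_n k G n x z) (mul_n k G n y z).
Proof. case: n x y z => [|n] x y z /=; first exact: olt_mul.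
have -> : (fun t => y t + z t - (x t + z t)) = (fun t => y t - x t) :> (Tn k G n -> k).
  by apply: functional_extensionality => t; rewrite opprD addrACA subrr addr0.
by []. Qed.

Lemma lt_n_mul_l {k : realFieldType} {G : oagroup} n (x y z : Tn k G n) :
  lt_n k G n x y -> lt_n k G n (mul_n k G n z x) (mul_n k G n z y).
Proof. by rewrite ![mul_n _ _ _ z _]mul_nC; apply: lt_n_mul. Qed.

Lemma lt_n_mul_lK {k : realFieldType} {G : oagroup} n (x y z : Tn k G n) :
  lt_n k G n (mul_n k G n z x) (mul_n k G n z y) -> lt_n k G n x y.
Proof. by move=> /(@lt_n_mul_l _ _ n _ _ (inv_n k G n z)); rewrite !mul_nK. Qed.

Definition OK (k : realFieldType) (G : oagroup) (n : nat) : Prop :=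
  let V := validT k G n in let lt := lt_n k G n in
  V (one_n k G n) /\
  (forall x y, V x -> V y -> V (mul_n k G n x y)) /\
  (forall x, V x -> V (inv_n k G n x)) /\
  (forall x y z, V x -> V y -> V z -> lt x y -> lt y z -> lt x z) /\
  (forall x y, V x -> V y -> x <> y -> lt x y \/ lt y x).

Lemma OK_all {k : realFieldType} {G : oagroup} n : OK k G n.
Proof.
elim: n => [|n [V1 [VM [VI [tr to]]]]].
  split=> //; split=> //; split=> //; split; first by move=> x y z _ _ _; apply: olt_trans.
  move=> x y _ _ ne; case: (@olt_total G x y) => [|[]]; auto; by [].
set V := validT k G n; set lt := lt_n k G n.
have supV : forall a : Tn k G n.+1, validT k G n.+1 a -> forall x, a x <> 0 -> V x.
  by move=> a [_ Ha] x /Ha [].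
have addV : forall a b : Tn k G n.+1, validT k G n.+1 a -> validT k G n.+1 b ->
   antiwo _ lt (supp k _ (fun x => a x + b x)) /\
   (forall x, a x + b x <> 0 -> V x /\ lt (one_n k G n) x).
  move=> a b [Aa Ha] [Ab Hb]; split.
    apply: (@antiwo_sub _ lt (fun x => supp k _ a x \/ supp k _ b x)).
      apply: (@antiwo_union _ lt V) => //.
      - by move=> x /Ha [].
      - by move=> x /Hb [].
    move=> x; rewrite /supp => H; case: (classic (a x = 0)) => [e|]; auto.
    by right => e'; apply: H; rewrite e e' addr0.
  move=> x H; case: (classic (a x = 0)) => [e|/Ha //].
  by apply: Hb => e'; apply: H; rewrite e e' addr0.
have oppV : forall a : Tn k G n.+1, validT k G n.+1 a -> validT k G n.+1 (fun x => - a x).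
  move=> a [Aa Ha]; split.
    by apply: (@antiwo_sub _ (lt_n k G n) (supp k (Tn k G n) a) _ Aa) => x; rewrite /supp => H e; apply: H; rewrite e oppr0.
  by move=> x H; apply: Ha => e; apply: H; rewrite e oppr0.
have maxd : forall a b : Tn k G n.+1, validT k G n.+1 a -> validT k G n.+1 b ->
   (exists x, b x - a x <> 0) ->
   exists w, b w - a w <> 0 /\ V w /\ forall x, lt w x -> b x - a x = 0.
  move=> a b va vb ex.
  have [A H] := addV b (fun x => - a x) vb (oppV a va).
  have [w [Hw M]] := antiwo_max lt _ A ex.
  exists w; split => //; split; first by case: (H w Hw).
  apply: (@max_above _ _ lt V) => //.
  - exact: lt_n_irr.
  - by move=> x /H [].
  - by case: (H w Hw).
split.
  split; first by move=> X HX [x Xx]; case: (HX x Xx).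
  by move=> x.
split.
  by move=> x y vx vy; have := addV x y vx vy.
split; first exact: oppV.
split.
  move=> a b c va vb vc /= [w1 [p1 z1]] [w2 [p2 z2]].
  have d1w : b w1 - a w1 <> 0 by move=> e; rewrite e ltxx in p1.
  have d2w : c w2 - b w2 <> 0 by move=> e; rewrite e ltxx in p2.
  have Vw1 : V w1.
    have [_ H] := addV b (fun x => - a x) vb (oppV a va); by case: (H w1 d1w).
  have Vw2 : V w2.
    have [_ H] := addV c (fun x => - b x) vc (oppV b vb); by case: (H w2 d2w).
  have eq : forall x, c x - a x = (c x - b x) + (b x - a x).
    by move=> x; rewrite addrA subrK.
  case: (classic (w1 = w2)) => [e|ne].
    subst w2; exists w1; split; first by rewrite eq addr_gt0.
    by move=> x lx; rewrite eq z1 // z2 // addr0.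
  case: (to w1 w2 Vw1 Vw2 ne) => l12.
    exists w2; split; first by rewrite eq z1 // addr0.
    move=> x lx; rewrite eq z2 // add0r.
    case: (classic (b x - a x = 0)) => // dx.
    have [_ H] := addV b (fun x => - a x) vb (oppV a va); have [Vx _] := H x dx.
    by rewrite z1 //; apply: (tr w1 w2 x).
  exists w1; split; first by rewrite eq z2 // add0r.
  move=> x lx; rewrite eq z1 // addr0.
  case: (classic (c x - b x = 0)) => // dx.
  have [_ H] := addV c (fun x => - b x) vc (oppV b vb); have [Vx _] := H x dx.
  by rewrite z2 //; apply: (tr w2 w1 x).
move=> a b va vb ne.
have ex : exists x, b x - a x <> 0.
  apply: NNPP => H; apply: ne; apply: functional_extensionality => x.
  apply: NNPP => h; apply: H; exists x => /eqP; rewrite subr_eq0 => /eqP e.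
  by apply: h; rewrite e.
have [w [Hw [Vw M]]] := maxd a b va vb ex.
case: (ltrgtP (b w - a w) 0) => hw; last by [].
  right; exists w; split; first by rewrite -opprB oppr_gt0.
  by move=> x /M e; rewrite -opprB e oppr0.
by left; exists w.
Qed.

Lemma liftto_trans {k : realFieldType} {G : oagroup} {l : G -> G -> k} {n m m' : nat} a :
  (n <= m)%N -> (m <= m')%N ->
  liftto k G l n m' a = liftto k G l m m' (liftto k G l n m a).
Proof.
move=> nm; elim: m' => [|m' IH] mm'.
  by move: mm'; rewrite leqn0 => /eqP E; subst m; rewrite liftto_refl.
case: (ltngtP m m'.+1) mm' => // [lt _|-> _]; last by rewrite liftto_refl.
rewrite liftto_S; last exact: (leq_trans nm).
by rewrite liftto_S // IH.
Qed.

Lemma l_n_inj_all {k : realFieldType} {G : oagroup} {l : G -> G -> k} :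
  prelog_section k G l -> forall n, injf (l_n k G l n).
Proof.
move=> [hl1 [hl2 hl3]]; elim=> [|n IH].
  move=> g h /= E; case: (@olt_total G g h) => [lt|[//|lt]].
    by have [w [p _]] := hl3 _ _ lt; rewrite E subrr ltxx in p.
  by have [w [p _]] := hl3 _ _ lt; rewrite E subrr ltxx in p.
move=> a b /= E; apply: functional_extensionality => x.
by apply: (@push_injP k (Tn k G n) (Tn k G n.+1) (l_n k G l n) a b IH) => t; rewrite E.
Qed.

Lemma liftto_inj {k : realFieldType} {G : oagroup} {l : G -> G -> k} n m a b :
  prelog_section k G l -> (n <= m)%N -> liftto k G l n m a = liftto k G l n m b -> a = b.
Proof.
move=> hl; elim: m => [|m IH].
  by rewrite leqn0 => /eqP E; subst n; rewrite !liftto_refl.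
case: (ltngtP n m.+1) => // [lt _|<- _]; last by rewrite !liftto_refl.
rewrite !liftto_S // => E; apply: IH => //.
apply: functional_extensionality => x.
by apply: (@push_injP k (Tn k G m) (Tn k G m.+1) (l_n k G l m) _ _ (l_n_inj_all hl m)) => t; rewrite E.
Qed.

Lemma l_one0 {k : realFieldType} {G : oagroup} {l : G -> G -> k} :
  prelog_section k G l -> forall x, l (oone G) x = 0.
Proof.
move=> [_ [hl2 _]] x; have := hl2 (oone G) (oone G) x; rewrite omul1 => /(congr1 (fun t => t - l (oone G) x)).
by rewrite subrr addrK.
Qed.

Lemma l_n_one {k : realFieldType} {G : oagroup} {l : G -> G -> k} n :
  prelog_section k G l -> l_n k G l n (one_n k G n) = one_n k G n.+1.
Proof.
move=> hl; case: n => [|n] /=; apply: functional_extensionality => x.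
  exact: l_one0.
case: (push_cases (l_n k G l n) x) => [[y ->]|H]; last by rewrite push_out.
by rewrite push_at //; apply: l_n_inj_all.
Qed.

Lemma l_n_mono {k : realFieldType} {G : oagroup} {l : G -> G -> k} :
  prelog_section k G l -> forall n,
  (forall x, validT k G n x -> validT k G n.+1 (l_n k G l n x)) /\
  (forall x y, validT k G n x -> validT k G n y -> lt_n k G n x y ->
     lt_n k G n.+1 (l_n k G l n x) (l_n k G l n y)).
Proof.
move=> hl; have linj := l_n_inj_all hl.
have [hl1 [hl2 hl3]] := hl.
elim=> [|n [LV LM]].
  split; last by move=> x y _ _ /hl3.
  move=> x _; have [A S] := hl1 x; split => // t /S; by split.
have [V1 [VM [VI [tr to]]]] := @OK_all k G n.
have [V1' [VM' [VI' [tr' to']]]] := @OK_all k G n.+1.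
split.
  have pa := fun (a : Tn k G n.+1) y => push_at (l_n k G l n) a y (linj n).
  move=> a [Aa Sa]; split.
    move=> X HX [x0 Xx0].
    have [y0 [e0 _]] := @push_ne0 _ _ _ _ _ _ (linj n) (HX x0 Xx0).
    have HX' : forall y, X (l_n k G l n y) -> supp k _ a y.
      by move=> y Xy; move: (HX _ Xy); rewrite /supp /= pa.
    have [m [Xm M]] := Aa (fun y => X (l_n k G l n y)) HX' (ex_intro _ y0 (eq_ind _ X Xx0 _ e0)).
    exists (l_n k G l n m); split => // t Xt.
    have [y [ey ay]] := @push_ne0 _ _ _ _ _ _ (linj n) (HX t Xt); subst t.
    case: (M y Xt) => [->|lt]; [by left | right].
    have [Vy _] := Sa y ay.
    have am : a m <> 0 by move: (HX _ Xm); rewrite /supp /= pa.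
    have [Vm _] := Sa m am.
    exact: LM.
  move=> t /(@push_ne0 _ _ _ _ _ _ (linj n)) [y [-> ay]]; have [Vy ly] := Sa y ay.
  split; first exact: LV.
  by rewrite -(l_n_one n hl); apply: LM.
move=> a b va vb [w [pw zw]].
have Vsupp : forall y, b y - a y <> 0 -> validT k G n y.
  move=> y H; case: (classic (a y = 0)) => [e|ay]; last by case: (proj2 va y ay).
  by have [Vy _] : validT k G n y /\ _ := proj2 vb y (fun e' => H ltac:(by rewrite e e' subrr)).
have Vw : validT k G n w by apply: Vsupp => e; rewrite e ltxx in pw.
exists (l_n k G l n w); split.
  by rewrite /= !push_at.
move=> t lt; case: (push_cases (l_n k G l n) t) => [[y ey]|H]; last by rewrite /= !push_out // subrr.
subst t; rewrite /= !push_at //.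
case: (classic (b y - a y = 0)) => // dy.
have Vy := Vsupp y dy.
case: (classic (y = w)) => [e|ne]; first by subst; case: (lt_n_irr _ _ lt).
case: (to y w Vy Vw ne) => l1; last by rewrite zw.
have := LM _ _ Vy Vw l1 => l2.
by case: (lt_n_irr _ _ (tr' _ _ _ (LV _ Vy) (LV _ Vw) (LV _ Vy) l2 lt)).
Qed.

Lemma psi_n_inj_all {k : realFieldType} {G : oagroup} {l : G -> G -> k} {psi : G -> G} :
  morphism_l k G l psi -> forall n, injf (psi_n k G psi n).
Proof.
move=> [_ [hp2 _]]; elim=> [|n IH].
  move=> g h /= E; case: (@olt_total G g h) => [lt|[//|lt]].
    by have := hp2 _ _ lt; rewrite E => /olt_irr.
  by have := hp2 _ _ lt; rewrite E => /olt_irr.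
move=> a b /= E; apply: functional_extensionality => x.
by apply: (@push_injP k (Tn k G n) (Tn k G n) (psi_n k G psi n) a b IH) => t; rewrite E.
Qed.

Lemma psi_comm {k : realFieldType} {G : oagroup} {l : G -> G -> k} {psi : G -> G} :
  prelog_section k G l -> morphism_l k G l psi -> forall n (z : Tn k G n),
  psi_n k G psi n.+1 (l_n k G l n z) = l_n k G l n (psi_n k G psi n z).
Proof.
move=> hl hp; have pinj := psi_n_inj_all hp; have linj := l_n_inj_all hl.
have [_ [_ hp3]] := hp.
elim=> [|n IH] z.
  by apply: functional_extensionality => x /=; rewrite hp3.
rewrite /= (push_comp _ _ _ (pinj n.+1) (linj n)) (push_comp _ _ _ (linj n) (pinj n)).
have -> : (fun x => psi_n k G psi n.+1 (l_n k G l n x)) = (fun x => l_n k G l n (psi_n k G psi n x)).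
  by apply: functional_extensionality => x; rewrite IH.
by [].
Qed.

Lemma liftto_psi {k : realFieldType} {G : oagroup} {l : G -> G -> k} {psi : G -> G} :
  prelog_section k G l -> morphism_l k G l psi -> forall n m (a : Tn k G n -> k),
  (n <= m)%N ->
  liftto k G l n m (push k _ _ (psi_n k G psi n) a) = push k _ _ (psi_n k G psi m) (liftto k G l n m a).
Proof.
move=> hl hp n m a; have pinj := psi_n_inj_all hp; have linj := l_n_inj_all hl.
elim: m => [|m IH].
  by rewrite leqn0 => /eqP E; subst n; rewrite !liftto_refl.
case: (ltngtP n m.+1) => // [lt _|<- _]; last by rewrite !liftto_refl.
rewrite !liftto_S // IH // (push_comp _ _ _ (linj m) (pinj m)) (push_comp _ _ _ (pinj m.+1) (linj m)).
have -> : (fun x => l_n k G l m (psi_n k G psi m x)) = (fun x => psi_n k G psi m.+1 (l_n k G l m x)).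
  by apply: functional_extensionality => x; rewrite (psi_comm hl hp).
by [].
Qed.

Lemma ELeq_intro {k : realFieldType} {G : oagroup} {l : G -> G -> k} n n' m
  (a : Tn k G n -> k) (b : Tn k G n' -> k) :
  (n <= m)%N -> (n' <= m)%N -> liftto k G l n m a = liftto k G l n' m b ->
  ELeq k G l (existT _ n a) (existT _ n' b).
Proof. by move=> h1 h2 E; exists m; split => //; split => // t /=; rewrite E. Qed.

Lemma ELeq_up {k : realFieldType} {G : oagroup} {l : G -> G -> k} {x y : EL k G} :
  ELeq k G l x y -> forall M, exists m, (M <= m)%N /\ (projT1 x <= m)%N /\ (projT1 y <= m)%N /\
     liftto k G l _ m (projT2 x) = liftto k G l _ m (projT2 y).
Proof.
case=> m [h1 [h2 E]] M; exists (maxn m M); split; first exact: leq_maxr.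
have hm := leq_maxl m M.
split; first exact: (leq_trans h1).
split; first exact: (leq_trans h2).
rewrite (liftto_trans _ h1 hm) (liftto_trans _ h2 hm).
by have -> : liftto k G l _ m (projT2 x) = liftto k G l _ m (projT2 y) by apply: functional_extensionality.
Qed.

Lemma ELeq_sym {k : realFieldType} {G : oagroup} {l : G -> G -> k} {x y : EL k G} :
  ELeq k G l x y -> ELeq k G l y x.
Proof. by case=> m [h1 [h2 E]]; exists m; split => //; split => // t; rewrite E. Qed.

Lemma ELeq_refl {k : realFieldType} {G : oagroup} {l : G -> G -> k} (x : EL k G) :
  ELeq k G l x x.
Proof. by exists (projT1 x). Qed.

Lemma ELeq_trans {k : realFieldType} {G : oagroup} {l : G -> G -> k} {x y z : EL k G} :
  ELeq k G l x y -> ELeq k G l y z -> ELeq k G l x z.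
Proof.
move=> H1 H2; have [m1 [_ [a1 [b1 E1]]]] := ELeq_up H1 0.
have [m2 [h [a2 [b2 E2]]]] := ELeq_up H2 m1.
exists m2; split; first exact: (leq_trans a1).
split => // t.
by rewrite -E2 (liftto_trans _ a1 h) (liftto_trans _ b1 h) E1.
Qed.

Lemma ELeq_at {k : realFieldType} {G : oagroup} {l : G -> G -> k} (x y : EL k G) m :
  prelog_section k G l -> ELeq k G l x y -> (projT1 x <= m)%N -> (projT1 y <= m)%N ->
  liftto k G l _ m (projT2 x) = liftto k G l _ m (projT2 y).
Proof.
move=> hl H h1 h2; have [M [hM [a [b E]]]] := ELeq_up H m.
apply: (@liftto_inj k G l m M) => //.
by rewrite -!liftto_trans.
Qed.

Lemma ELpsi_eq {k : realFieldType} {G : oagroup} {l : G -> G -> k} {psi : G -> G} (x y : EL k G) :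
  prelog_section k G l -> morphism_l k G l psi ->
  ELeq k G l x y -> ELeq k G l (ELpsi k G psi x) (ELpsi k G psi y).
Proof.
move=> hl hp H; have [m [_ [a [b E]]]] := ELeq_up H 0.
exists m; split => //; split => // t /=.
by rewrite !(liftto_psi hl hp) // E.
Qed.

Lemma ELpsi_inj {k : realFieldType} {G : oagroup} {l : G -> G -> k} {psi : G -> G} (x y : EL k G) :
  prelog_section k G l -> morphism_l k G l psi ->
  ELeq k G l (ELpsi k G psi x) (ELpsi k G psi y) -> ELeq k G l x y.
Proof.
move=> hl hp H; have [m [_ [a [b E]]]] := ELeq_up H 0.
exists m; split => //; split => // t.
move: E; rewrite /= !(liftto_psi hl hp) // => E.
by apply: (@push_injP k (Tn k G m) (Tn k G m) (psi_n k G psi m) _ _ (psi_n_inj_all hp m)) => s; rewrite E.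
Qed.

Lemma mono_ne0 {k : realFieldType} {T : Type} (g x : T) : mono k T g x <> 0 -> x = g.
Proof. by rewrite /mono; case: excluded_middle_informative. Qed.

Lemma mono_eq {k : realFieldType} {T : Type} (g : T) : mono k T g g = 1.
Proof. by rewrite /mono; case: excluded_middle_informative. Qed.

Lemma mono_neq {k : realFieldType} {T : Type} (g x : T) : x <> g -> mono k T g x = 0.
Proof. by rewrite /mono; case: excluded_middle_informative. Qed.

Lemma smul_ne0 {k : realFieldType} {T : Type} mul (a b : T -> k) z :
  smul k T mul a b z <> 0 -> exists p1 p2, mul p1 p2 = z /\ a p1 <> 0 /\ b p2 <> 0.
Proof. by move=> /fsum_ne0 [[p1 p2] [[/= e [h1 h2]] _]]; exists p1, p2. Qed.

Lemma spow_zero {k : realFieldType} {T : Type} mul one (eps : T -> k) :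
  (forall x, eps x = 0) -> forall j z, spow k T mul one eps j.+1 z = 0.
Proof.
move=> H j z; case: (classic (spow k T mul one eps j.+1 z = 0)) => // hne.
have [p1 [p2 [_ [h1 _]]]] := smul_ne0 _ _ _ _ hne; by case: (h1 (H p1)).
Qed.

Lemma ssum_ne0 {k : realFieldType} {T : Type} (f : nat -> T -> k) z :
  ssum k T f z <> 0 -> exists i, f i z <> 0.
Proof. by move=> /fsum_ne0 [i [h _]]; exists i. Qed.

Lemma log1 {k : realFieldType} (logk : k -> k) : is_log k logk -> logk 1 = 0.
Proof.
move=> [h1 _]; have := h1 1 1 ltr01 ltr01; rewrite mulr1 => /(congr1 (fun t => t - logk 1)).
by rewrite subrr addrK.
Qed.

Lemma log_eq0 {k : realFieldType} (logk : k -> k) a :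
  is_log k logk -> 0 < a -> logk a = 0 -> a = 1.
Proof.
move=> hlog a0 la; have l1 := log1 logk hlog; have [_ [h2 _]] := hlog.
case: (ltrgtP a 1) => // h.
  by have := h2 _ _ a0 h; rewrite la l1 ltxx.
by have := h2 _ _ ltr01 h; rewrite la l1 ltxx.
Qed.

Lemma slog_mono {k : realFieldType} {G : oagroup} {l : G -> G -> k} (logk : k -> k) n (g : Tn k G n) x :
  is_log k logk ->
  slog k logk (Tn k G n) (lt_n k G n) (mul_n k G n) (one_n k G n) (l_n k G l n) (mono k _ g) x
  = l_n k G l n g x.
Proof.
move=> hlog.
have Hl : lead k (Tn k G n) (lt_n k G n) (one_n k G n) (mono k _ g) = g.
  rewrite /lead; case: excluded_middle_informative => [H|H].
    by case: (constructive_indefinite_description _ H) => g' [Hg _] /=; apply: (@mono_ne0 k).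
  exfalso; apply: H; exists g; rewrite mono_eq; split; first by apply/eqP; exact: oner_neq0.
  move=> y ly; apply: mono_neq => e; rewrite e in ly; exact: (lt_n_irr _ _ ly).
rewrite /slog Hl mono_eq (log1 logk hlog) mul0r addr0.
have -> : ssum k (Tn k G n) (fun i y => (-1) ^+ i / i.+1%:R *
     spow k (Tn k G n) (mul_n k G n) (one_n k G n)
       (fun x0 => if excluded_middle_informative (x0 = one_n k G n) then 0
                  else mono k (Tn k G n) g (mul_n k G n g x0) / 1) i.+1 y) x = 0.
  apply: fsum0 => i; rewrite spow_zero ?mulr0 //.
  move=> y; case: excluded_middle_informative => // ne.
  by rewrite mono_neq ?mul0r // => /mul_n_eqg.
by rewrite addr0.
Qed.

Lemma logU {k : realFieldType} {G : oagroup} {l : G -> G -> k} (logk : k -> k) n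
  (y B : Tn k G n -> k) (M : Tn k G n) (c : k) :
  is_log k logk -> prelog_section k G l ->
  series_in k (Tn k G n) (lt_n k G n) (validT k G n) y ->
  spos k (Tn k G n) (lt_n k G n) y ->
  validT k G n M -> lt_n k G n (one_n k G n) M -> (forall x, B x = c * mono k _ M x) ->
  (forall x, slog k logk (Tn k G n) (lt_n k G n) (mul_n k G n) (one_n k G n) (l_n k G l n) y x = B x) ->
  exists g, validT k G n g /\ (forall x, y x = mono k _ g x) /\ (forall x, l_n k G l n g x = B x).
Proof.
move=> hlog hl [Ay Sy] [g0 [pg0 zg0]] VM lM HB HL.
have [V1 [VMul [VI [tr to]]]] := @OK_all k G n.
have [LV _] := l_n_mono hl n.
have irr := @lt_n_irr k G n.
have yg0 : y g0 <> 0 by move=> e; rewrite e ltxx in pg0.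
have Vg0 := Sy g0 yg0.
have Hl : lead k (Tn k G n) (lt_n k G n) (one_n k G n) y = g0.
  rewrite /lead; case: excluded_middle_informative => [H|H]; last by case: H; exists g0.
  case: (constructive_indefinite_description _ H) => g' [yg' zg'] /=.
  apply: NNPP => ne; case: (to g' g0 (Sy _ yg') Vg0 ne) => lt.
    by apply: yg0; apply: zg'.
  by apply: yg'; apply: zg0.
set a := y g0.
set eps := fun x => if excluded_middle_informative (x = one_n k G n) then 0
                    else y (mul_n k G n g0 x) / a.
set S := ssum k (Tn k G n) (fun i z => (-1) ^+ i / i.+1%:R *
            spow k (Tn k G n) (mul_n k G n) (one_n k G n) eps i.+1 z).
have HL' : forall x, l_n k G l n g0 x + logk a * mono k _ (one_n k G n) x + S x = B x.
  by move=> x; rewrite -HL /slog Hl.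
have e1 : forall x, eps x <> 0 -> validT k G n x /\ lt_n k G n x (one_n k G n).
  move=> x; rewrite /eps; case: excluded_middle_informative => // nx ex.
  have yx : y (mul_n k G n g0 x) <> 0 by move=> e; apply: ex; rewrite e mul0r.
  have Vgx := Sy _ yx.
  have Vx : validT k G n x by rewrite -(@mul_nK _ _ n g0 x); apply: VMul => //; apply: VI.
  split => //.
  have ne : mul_n k G n g0 x <> g0 by move=> /mul_n_eqg.
  case: (to _ _ Vgx Vg0 ne) => lt; last by case: yx; apply: zg0.
  by apply: (@lt_n_mul_lK _ _ n _ _ g0); rewrite mul_n1.
have e2 : antiwo _ (lt_n k G n) (supp k _ eps).
  move=> X HX [x0 Xx0].
  have sub : forall z, (exists x, X x /\ z = mul_n k G n g0 x) -> supp k _ y z.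
    move=> z [x [Xx ez]] e; apply: (HX x Xx); rewrite /eps /=.
    destruct (excluded_middle_informative (x = one_n k G n)) => //; by rewrite -ez e mul0r.
  have [z0 [[x1 [Xx1 ez0]] M0]] := Ay (fun z => exists x, X x /\ z = mul_n k G n g0 x) sub
     (ex_intro _ _ (ex_intro _ x0 (conj Xx0 erefl))).
  subst z0.
  exists x1; split => // x Xx.
  case: (M0 (mul_n k G n g0 x) (ex_intro _ x (conj Xx erefl))) => [/mul_n_inj|lt]; first by left.
  by right; apply: (@lt_n_mul_lK _ _ n _ _ g0).
have s0 : forall j z, spow k _ (mul_n k G n) (one_n k G n) eps j.+1 z <> 0 ->
    validT k G n z /\ lt_n k G n z (one_n k G n).
  elim=> [|j IH] z hz.
    have [p1 [p2 [<- [h1 h2]]]] := smul_ne0 _ _ _ _ hz.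
    by rewrite (mono_ne0 _ _ h2) mul_n1; apply: e1.
  have [p1 [p2 [<- [h1 h2]]]] := smul_ne0 _ _ _ _ hz.
  have [Vp1 l1] := e1 _ h1; have [Vp2 l2] := IH _ h2.
  split; first exact: VMul.
  apply: (tr _ p1 _ (VMul _ _ Vp1 Vp2) Vp1 V1 _ l1).
  by rewrite -{2}(@mul_n1 _ _ n p1); apply: lt_n_mul_l.
have sS : forall z, S z <> 0 -> validT k G n z /\ lt_n k G n z (one_n k G n).
  move=> z hz; have [i hi] := ssum_ne0 _ _ hz; apply: (s0 i) => e; apply: hi; by rewrite e mulr0.
have LVg := LV _ Vg0.
have lg_supp : forall x, l_n k G l n g0 x <> 0 -> lt_n k G n (one_n k G n) x.
  by move=> x /(proj2 LVg) [].
have a1 : a = 1.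
  apply: (log_eq0 logk a hlog) => //.
  have := HL' (one_n k G n).
  rewrite HB mono_eq mulr1 (mono_neq M (one_n k G n)); last by move=> ee; rewrite ee in lM; exact: (irr _ lM).
  have -> : l_n k G l n g0 (one_n k G n) = 0.
    by case: (classic (l_n k G l n g0 (one_n k G n) = 0)) => // /lg_supp /irr.
  have -> : S (one_n k G n) = 0.
    by case: (classic (S (one_n k G n) = 0)) => // /sS [_ /irr].
  by rewrite mulr0 add0r addr0.
have S0 : forall x, S x = 0.
  move=> x; case: (classic (S x = 0)) => // /sS [Vx lx].
  have := HL' x; rewrite HB a1 log1 // mul0r addr0.
  have -> : l_n k G l n g0 x = 0.
    case: (classic (l_n k G l n g0 x = 0)) => // /lg_supp lx'.
    by case: (irr _ (tr _ _ _ Vx V1 Vx lx lx')).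
  rewrite add0r => ->.
  rewrite mono_neq ?mulr0 // => e; rewrite e in lx.
  by case: (irr _ (tr _ _ _ VM V1 VM lx lM)).
have eps0 : forall x, eps x = 0.
  apply: NNPP => H.
  have ex : exists x, eps x <> 0 by apply: NNPP => H'; apply: H => x; apply: NNPP => h; apply: H'; exists x.
  have [v [ev Mv]] := antiwo_max _ _ e2 ex.
  have [Vv lv] := e1 _ ev.
  have s1 : forall j z, spow k _ (mul_n k G n) (one_n k G n) eps j.+2 z <> 0 -> lt_n k G n z v.
    move=> j z hz; have [p1 [p2 [<- [h1 h2]]]] := smul_ne0 _ _ _ _ hz.
    have [Vp1 _] := e1 _ h1; have [Vp2 l2] := s0 _ _ h2.
    have lp : lt_n k G n (mul_n k G n p1 p2) p1.
      by rewrite -{2}(@mul_n1 _ _ n p1); apply: lt_n_mul_l.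
    case: (Mv _ h1) => [e|lt]; first by rewrite -e.
    by apply: (tr _ p1) => //; exact: VMul.
  have sp1 : smul k _ (mul_n k G n) eps (mono k _ (one_n k G n)) v = eps v.
    rewrite /= /smul (fsum1 _ _ _ _ (v, one_n k G n)) /= ?mono_eq ?mulr1 //.
    case=> p1 p2 /=; split.
      case=> e [h1 h2]; have e2' := mono_ne0 _ _ h2; subst p2.
      by rewrite mul_n1 in e; rewrite e.
    case=> -> ->; split; first exact: mul_n1.
    by split => //; rewrite mono_eq; apply/eqP; exact: oner_neq0.
  have Sv : S v = eps v.
    rewrite /S /ssum (fsum1 _ _ _ _ 0%N) /=.
      by rewrite expr0 sp1 divr1 mul1r.
    case=> [|i] /=; split => //.
      by move=> _; rewrite expr0 sp1 divr1 mul1r.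
    move=> h; exfalso; apply: h.
    have h0 : spow k _ (mul_n k G n) (one_n k G n) eps i.+2 v = 0.
      by case: (classic (spow k _ (mul_n k G n) (one_n k G n) eps i.+2 v = 0)) => // /s1 /irr.
    by move: h0 => /= ->; rewrite mulr0.
  by apply: ev; rewrite -Sv S0.
exists g0; split => //; split.
  move=> z; case: (classic (z = g0)) => [->|nz]; first by rewrite mono_eq.
  rewrite mono_neq //.
  set x := mul_n k G n (inv_n k G n g0) z.
  have gx : mul_n k G n g0 x = z by rewrite /x mul_nA mul_nV mul_1n.
  have nx : x <> one_n k G n by move=> e; apply: nz; rewrite -gx e mul_n1.
  have := eps0 x; rewrite /eps /=.
  by destruct (excluded_middle_informative (x = one_n k G n)) => //; rewrite gx a1 divr1.
move=> x; by rewrite -HL' a1 (log1 logk hlog) mul0r addr0 S0 addr0.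
Qed.

Lemma antiwo_single {T : Type} (lt : T -> T -> Prop) (S : T -> Prop) z :
  (forall x, S x -> x = z) -> antiwo T lt S.
Proof.
move=> H X HX [x0 Xx0]; exists x0; split => // x Xx; left.
by rewrite (H _ (HX _ Xx)) (H _ (HX _ Xx0)).
Qed.

Lemma push_smono {k : realFieldType} {A B : Type} (f : A -> B) (c : k) z :
  injf f -> push k A B f (fun x => c * mono k A z x) = (fun x => c * mono k B (f z) x).
Proof.
move=> fi; apply: functional_extensionality => t.
have := push_lin f (mono k A z) (mono k A z) c 0 t fi.
rewrite (push_mono _ _ fi) !mul0r !addr0.
by have -> : (fun x => c * mono k A z x + 0 * mono k A z x) = (fun x => c * mono k A z x)
  by apply: functional_extensionality => x; rewrite mul0r addr0.
Qed.

Lemma liftto0_smono {k : realFieldType} {G : oagroup} {l : G -> G -> k} (c : k) (m0 : G) :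
  prelog_section k G l -> olt G (oone G) m0 -> forall m,
  exists z, validT k G m z /\ lt_n k G m (one_n k G m) z /\
    liftto k G l 0 m (fun x => c * mono k _ m0 x) = (fun x => c * mono k _ z x).
Proof.
move=> hl lm0; elim=> [|m [z [Vz [lz E]]]].
  by exists m0; rewrite liftto_refl.
have [LV LM] := l_n_mono hl m.
have [V1 _] := @OK_all k G m.
exists (l_n k G l m z); split; first exact: LV.
split; first by rewrite -(l_n_one m hl); apply: LM.
by rewrite liftto_S // E push_smono //; apply: l_n_inj_all.
Qed.

Lemma liftto1_mono {k : realFieldType} {G : oagroup} {l : G -> G -> k} (b : G -> k) :
  prelog_section k G l -> forall j,
  liftto k G l 1 j.+1 (mono k (Tn k G 1) b) = mono k (Tn k G j.+1) (liftto k G l 0 j b).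
Proof.
move=> hl; elim=> [|j IH]; first by rewrite !liftto_refl.
rewrite liftto_S // IH push_mono; last exact: l_n_inj_all.
by rewrite [liftto _ _ _ 0 j.+1 b]liftto_S.
Qed.

Lemma ExpU {k : realFieldType} {G : oagroup} {l : G -> G -> k} (logk : k -> k) (c : k) (m0 : G) :
  is_log k logk -> prelog_section k G l -> olt G (oone G) m0 ->
  ELeq k G l (ELExp k G l logk (ELof0 k G (fun x => c * mono k _ m0 x)))
             (existT _ 1%N (mono k (Tn k G 1) (fun x => c * mono k _ m0 x))).
Proof.
move=> hlog hl lm0.
set b := (fun x => c * mono k _ m0 x) : G -> k.
rewrite /ELExp; case: excluded_middle_informative => [H|H]; last first.
  exfalso; apply: H; exists (existT _ 1%N (mono k (Tn k G 1) b)).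
  split.
    split.
      by apply: (antiwo_single _ _ b) => x hx; apply: (@mono_ne0 k).
    move=> x hx; have -> : x = b by apply: (@mono_ne0 k).
    split.
      by apply: (antiwo_single _ _ m0) => y hy; apply: (@mono_ne0 k); move=> e; apply: hy; rewrite /b e mulr0.
    move=> y hy; split => //.
    have -> : y = m0 by apply: (@mono_ne0 k); move=> e; apply: hy; rewrite /b e mulr0.
    done.
  split.
    rewrite /ELpos /=; exists b; split; first by rewrite mono_eq ltr01.
    move=> x lx; apply: mono_neq => e; rewrite e in lx; case: (@lt_n_irr k G 1 b lx).
  apply: (@ELeq_intro _ _ _ _ _ 1%N) => //.
  rewrite liftto_refl liftto_S // liftto_refl.
  apply: functional_extensionality => x; exact: slog_mono.
case: (constructive_indefinite_description _ H) => [[n a] [Va [Pa Ea]]] /=.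
have E := ELeq_at _ _ n hl Ea (leqnn n) (leq0n n).
rewrite /= liftto_refl in E.
have [z [Vz [lz Ez]]] := liftto0_smono c m0 hl lm0 n.
have [g [Vg [ag lg]]] := logU logk n a _ z c hlog hl Va Pa Vz lz (fun x => erefl)
   (fun x => ltac:(by rewrite E Ez)).
apply: (@ELeq_intro _ _ _ _ _ n.+1) => //.
rewrite liftto_S // liftto_refl liftto1_mono //.
have -> : a = mono k _ g by apply: functional_extensionality.
rewrite push_mono; last exact: l_n_inj_all.
congr (mono _ _ _); apply: functional_extensionality => x.
by rewrite lg Ez.
Qed.

Lemma liftto0_one {k : realFieldType} {G : oagroup} {l : G -> G -> k} :
  prelog_section k G l -> forall N,
  liftto k G l 0 N (mono k G (oone G)) = mono k (Tn k G N) (one_n k G N).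
Proof.
move=> hl; elim=> [|N IH]; first by rewrite liftto_refl.
rewrite liftto_S // IH push_mono; last exact: l_n_inj_all.
by rewrite l_n_one.
Qed.

Lemma smul_one {k : realFieldType} {G : oagroup} N (X : Tn k G N -> k) :
  smul k (Tn k G N) (mul_n k G N) (mono k _ (one_n k G N)) X = X.
Proof.
apply: functional_extensionality => z; rewrite /smul.
case: (classic (X z = 0)) => Xz.
  rewrite Xz; apply: fsum0 => [[p1 p2]] /= [e [h1 h2]].
  have e1 := mono_ne0 _ _ h1; subst p1; rewrite mul_1n in e; subst p2; exact: h2.
rewrite (fsum1 _ _ _ _ (one_n k G N, z)) /= ?mono_eq ?mul1r //.
case=> p1 p2 /=; split.
  case=> e [h1 h2]; have e1 := mono_ne0 _ _ h1; subst p1; rewrite mul_1n in e; by subst p2.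
case=> -> ->; split; first exact: mul_1n.
by rewrite mono_eq; split => //; apply/eqP; exact: oner_neq0.
Qed.

Theorem lemma9 (k : realFieldType) (logk : k -> k) (G : oagroup)
  (l : G -> G -> k) (psi : G -> G) (H : G -> Prop)
  (hlog : is_log k logk) (hl : prelog_section k G l) (hpsi : morphism_l k G l psi)
  (hH : subgroup G H)
  (hComp : forall h, H h -> l_in_G k G l h -> forall x, mono k G (psi h) x = l h x) :
  forall (h : G) (c : k), H h -> l_in_G k G l h ->
    (* (1) psi^EL(Exp(c h)) = Exp(c Log h) *)
    ELeq k G l
      (ELpsi k G psi (ELExp k G l logk (ELof0 k G (fun x => c * mono k G h x))))
      (ELExp k G l logk (ELscale k G c (ELLog k G l logk (ELof0 k G (mono k G h))))) /\
    (* (2) if psi^EL is surjective, its preimage of Exp(c Log h) lies in H . Exp k((H^{>1})) *)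
    ((forall y : EL k G, ELvalid k G y ->
        exists x, ELvalid k G x /\ ELeq k G l (ELpsi k G psi x) y) ->
     forall x : EL k G, ELvalid k G x ->
       ELeq k G l (ELpsi k G psi x)
         (ELExp k G l logk (ELscale k G c (ELLog k G l logk (ELof0 k G (mono k G h))))) ->
       exists h', H h' /\ exists b : G -> k,
         series_in k G (olt G) (fun g => H g /\ olt G (oone G) g) b /\
         ELeq k G l x (ELmul k G l (ELof0 k G (mono k G h')) (ELExp k G l logk (ELof0 k G b)))).
Proof.
move=> h c Hh Hlh.
have lh : forall x, l h x = mono k G (psi h) x by move=> x; rewrite hComp.
have [hl1 [hl2 hl3]] := hl.
have [hp1 [hp2 hp3]] := hpsi.
have lpsih : olt G (oone G) (psi h).
  have [_ S] := hl1 h; apply: S; rewrite lh mono_eq; apply/eqP; exact: oner_neq0.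
have psi1 : psi (oone G) = oone G.
  have E := hp1 (oone G) (oone G); rewrite omul1 in E.
  set p := psi (oone G) in E *.
  transitivity (omul G (omul G (oinv G p) p) p); first by rewrite omulV omul1.
  by rewrite -omulA -E omulV.
have lth : olt G (oone G) h.
  case: (@olt_total G (oone G) h) => [//|[e|lt]].
    by rewrite -e psi1 in lpsih; case: (olt_irr _ _ lpsih).
  have := hp2 _ _ lt; rewrite psi1 => lt2.
  by case: (olt_irr _ _ (olt_trans _ _ _ _ lt2 lpsih)).
have ER : ELscale k G c (ELLog k G l logk (ELof0 k G (mono k G h))) =
          ELof0 k G (fun x => c * mono k G (psi h) x).
  rewrite /ELscale /ELLog /ELof0; congr existT; apply: functional_extensionality => x /=.
  by rewrite -lh; congr (_ * _); exact: (@slog_mono k G l logk 0%N h x hlog).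
rewrite ER.
have E1 := ExpU logk c h hlog hl lth.
have E2 := ExpU logk c (psi h) hlog hl lpsih.
have P0 : ELpsi k G psi (existT _ 1%N (mono k (Tn k G 1) (fun x => c * mono k G h x))) =
          existT _ 1%N (mono k (Tn k G 1) (fun x => c * mono k G (psi h) x)).
  rewrite /ELpsi /=; congr existT.
  rewrite push_mono; last exact: (psi_n_inj_all hpsi 1).
  congr (mono _ _ _) => /=.
  by rewrite push_smono //; apply: (psi_n_inj_all hpsi 0).
have part1 : ELeq k G l
      (ELpsi k G psi (ELExp k G l logk (ELof0 k G (fun x => c * mono k G h x))))
      (ELExp k G l logk (ELof0 k G (fun x => c * mono k G (psi h) x))).
  apply: ELeq_trans; first exact: (ELpsi_eq _ _ hl hpsi E1).
  by rewrite P0; apply: ELeq_sym.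
split => // _ x Vx Ex.
have Ex0 : ELeq k G l x (existT _ 1%N (mono k (Tn k G 1) (fun x => c * mono k G h x))).
  apply: (ELpsi_inj _ _ hl hpsi); rewrite P0.
  exact: (ELeq_trans Ex E2).
exists (oone G); split; first by case: hH.
exists (fun x => c * mono k G h x); split.
  split; first by apply: (antiwo_single _ _ h) => y hy; apply: (@mono_ne0 k) => e; apply: hy; rewrite e mulr0.
  move=> g hg; have eg : g = h by apply: (@mono_ne0 k) => e; apply: hg; rewrite e mulr0.
  by rewrite eg.
apply: (ELeq_trans Ex0); apply: ELeq_sym.
apply: (ELeq_trans _ E1).
move: (ELExp k G l logk (ELof0 k G (fun x => c * mono k G h x))) => [n e].
rewrite /ELmul /=.
apply: (@ELeq_intro _ _ _ _ _ (maxn 0 n)) => //; first exact: leq_maxr.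
by rewrite liftto_refl (liftto0_one hl) smul_one.
Qed.
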